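(* Let $\nu>0$, $b>0$ and let $f:\mathbb{R}\to\mathbb{R}$ be continuously differentiable with: $f(0)=f(a)=f(1)=0$ for some $a\in(0,1)$; $f<0$ on $(0,a)$, $f>0$ on $(a,1)$; $f'(0)<0$, $f'(a)>0$, $f'(1)<0$; $\int_0^1 f(v)\,dv\ge 0$; and there exists $v_\ast\in(a,1)$ such that $f''(v)>0$ for $v\in[0,v_\ast)$ and $f''(v)<0$ for $v\in(v_\ast,1]$. Let $\hat v:\mathbb{R}\to\mathbb{R}$ be a monotone increasing $C^2$ function with $\hat v(-\infty)=0$, $\hat v(+\infty)=1$, satisfying $c\hat v_x=\nu\hat v_{xx}+bf(\hat v)$ for some constant $c\in\mathbb{R}$. Then: (i) $\frac{f(\hat v)}{\hat v_x}$ is strictly monotone increasing on $\mathbb{R}$; in particular $-\frac{d^2}{dx^2}\log\hat v_x=-\frac{d}{dx}\frac{\hat v_{xx}}{\hat v_x}=\frac{b}{\nu}\frac{d}{dx}\frac{f(\hat v)}{\hat v_x}>0$, i.e. $\hat v_x$ is strictly log-concave. (ii) $\gamma_-:=\inf_{x\in\mathbb{R}}\frac{b}{\nu}\frac{f(\hat v)}{\hat v_x}(x)=\frac{c}{2\nu}-\sqrt{\left(\frac{c}{2\nu}\right)^2-\frac{b}{\nu}f'(0)}$ and $\gamma_+:=\sup_{x\in\mathbb{R}}\frac{b}{\nu}\frac{f(\hat v)}{\hat v_x}(x)=\frac{c}{2\nu}+\sqrt{\left(\frac{c}{2\nu}\right)^2-\frac{b}{\nu}f'(1)}$. (iii) $\int_{-\infty}^0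 e^{-2\alpha\frac{c}{\nu}x}(\hat v_x^2+\hat v_{xx}^2)\,dx<\infty$ for all $\alpha\in\mathbb{R}$ with $\alpha\frac{c}{\nu}<\frac{c}{\nu}-\gamma_-$, and $\int_0^{\infty} e^{-2\alpha\frac{c}{\nu}x}(\hat v_x^2+\hat v_{xx}^2)\,dx<\infty$ for all $\alpha\in\mathbb{R}$ with $\alpha\frac{c}{\nu}>\frac{c}{\nu}-\gamma_+$. In particular $\int_{\mathbb{R}}e^{-\frac{c}{\nu}x}(\hat v_x^2+\hat v_{xx}^2)\,dx<\infty$.
   Context: $\hat v$ is a travelling wave (with wave speed $c$, which is $\ge 0$ under $\int_0^1 f\ge 0$) of $\partial_t v=\nu v_{xx}+bf(v)$; the assumption on $f''$ includes that $f$ is twice differentiable on $[0,1]$. *)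

(* Defs.v *)
From Stdlib Require Export Reals.
From Coquelicot Require Export Coquelicot.
Open Scope R_scope.

Definition gamma_minus (nu b c : R) (f : R -> R) : R :=
  c / (2 * nu) - sqrt ((c / (2 * nu)) ^ 2 - b / nu * Derive f 0).
Definition gamma_plus (nu b c : R) (f : R -> R) : R :=
  c / (2 * nu) + sqrt ((c / (2 * nu)) ^ 2 - b / nu * Derive f 1).

(* Main.v *)
Require Import Defs.
From Stdlib Require Import Reals.
From Coquelicot Require Import Coquelicot.
From Stdlib Require Import Lra Psatz Classical.
Open Scope R_scope.


Lemma mvt_strict (F dF : R -> R) a b : a < b ->
  (forall x, a <= x <= b -> is_derive F x (dF x)) ->
  (forall x, a < x < b -> 0 < dF x) -> F a < F b.
Proof.
  intros Hab Hd Hp.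
  destruct (MVT_cor2 F dF a b Hab) as [c [Hc Hac]].
  { intros; apply is_derive_Reals; auto. }
  specialize (Hp c Hac). nra.
Qed.

Lemma mvt_le (F dF : R -> R) a b : a <= b ->
  (forall x, a <= x <= b -> is_derive F x (dF x)) ->
  (forall x, a < x < b -> 0 <= dF x) -> F a <= F b.
Proof.
  intros Hab Hd Hp. destruct (Req_dec a b) as [->|Hne]; [lra|].
  destruct (MVT_cor2 F dF a b) as [c [Hc Hac]]; [lra| |].
  { intros; apply is_derive_Reals; auto. }
  specialize (Hp c Hac). nra.
Qed.

Lemma deriv_incr_nonneg (F : R -> R) x l :
  (forall x y, x <= y -> F x <= F y) -> is_derive F x l -> 0 <= l.
Proof.
  intros Hm Hd. apply is_derive_Reals in Hd.
  destruct (Rle_or_lt 0 l) as [|Hl]; auto.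
  destruct (Hd (-l/2)) as [d Hdd]; [lra|].
  set (h := d/2).
  assert (Hh : 0 < h) by (unfold h; destruct d; simpl; lra).
  specialize (Hdd h). 
  assert (H1 : Rabs h < d) by (unfold h; rewrite Rabs_pos_eq; destruct d; simpl in *; lra).
  specialize (Hdd ltac:(lra) H1).
  assert (H2 : 0 <= (F (x + h) - F x) / h).
  { apply Rdiv_le_0_compat; [|lra]. assert (F x <= F (x+h)) by (apply Hm; lra). lra. }
  apply Rabs_def2 in Hdd. lra.
Qed.

Lemma deriv_min_zero (F : R -> R) x l :
  (forall y, F x <= F y) -> is_derive F x l -> l = 0.
Proof.
  intros Hm Hd. apply is_derive_Reals in Hd.
  destruct (Req_dec l 0) as [|Hl]; auto. exfalso.
  destruct (Hd (Rabs l/2)) as [d Hdd]; [apply Rabs_pos_lt in Hl; lra|].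
  set (h := d/2).
  assert (Hh : 0 < h) by (unfold h; destruct d; simpl; lra).
  assert (H1 : Rabs h < d) by (unfold h; rewrite Rabs_pos_eq; destruct d; simpl in *; lra).
  assert (H1' : Rabs (-h) < d) by (rewrite Rabs_Ropp; auto).
  pose proof (Hdd h ltac:(lra) H1) as A.
  pose proof (Hdd (-h) ltac:(lra) H1') as B.
  assert (H2 : 0 <= (F (x + h) - F x) / h).
  { apply Rdiv_le_0_compat; [|lra]. specialize (Hm (x+h)). lra. }
  assert (H3 : (F (x + - h) - F x) / - h <= 0).
  { unfold Rdiv. rewrite <- Ropp_inv_permute by lra.
    assert (0 <= (F (x + - h) - F x) * / h). { apply Rmult_le_pos; [specialize (Hm (x + - h)); lra| left; apply Rinv_0_lt_compat; lra]. }
    lra. }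
  apply Rabs_def2 in A. apply Rabs_def2 in B.
  destruct (Rle_or_lt 0 l).
  - rewrite Rabs_pos_eq in A, B by lra. lra.
  - rewrite Rabs_left in A, B by lra. lra.
Qed.

Definition limL (F : R -> R) (L : R) :=
  forall eps, 0 < eps -> exists M, forall x, x < M -> Rabs (F x - L) < eps.
Definition limR (F : R -> R) (L : R) :=
  forall eps, 0 < eps -> exists M, forall x, M < x -> Rabs (F x - L) < eps.

Lemma is_lim_limL F (L : R) : is_lim F m_infty L -> limL F L.
Proof.
  intros H. apply is_lim_spec in H. intros eps He.
  destruct (H (mkposreal eps He)) as [M HM]. exists M. exact HM.
Qed.
Lemma is_lim_limR F (L : R) : is_lim F p_infty L -> limR F L.
Proof.
  intros H. apply is_lim_spec in H. intros eps He.
  destruct (H (mkposreal eps He)) as [M HM]. exists M. exact HM.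
Qed.
Lemma limL_is_lim F (L : R) : limL F L -> is_lim F m_infty L.
Proof.
  intros H. apply is_lim_spec. intros [eps He].
  destruct (H eps He) as [M HM]. exists M. exact HM.
Qed.
Lemma limR_is_lim F (L : R) : limR F L -> is_lim F p_infty L.
Proof.
  intros H. apply is_lim_spec. intros [eps He].
  destruct (H eps He) as [M HM]. exists M. exact HM.
Qed.

Lemma mono_limL (F : R -> R) x1 B :
  (forall x y, x <= y <= x1 -> F y <= F x) -> (forall x, x <= x1 -> F x <= B) ->
  exists L, (forall x, x <= x1 -> F x <= L) /\ limL F L.
Proof.
  intros Hm Hb.
  set (E := fun r => exists x, x <= x1 /\ r = F x).
  destruct (completeness E) as [L [HL1 HL2]].
  { exists B. intros r [x [Hx ->]]. auto. }
  { exists (F x1). exists x1. split; auto; lra. }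
  exists L. split.
  { intros x Hx. apply HL1. exists x; auto. }
  intros eps He.
  destruct (classic (exists x0, x0 <= x1 /\ L - eps < F x0)) as [[x0 [Hx0 HF]]|Hn].
  - exists x0. intros x Hx.
    assert (F x0 <= F x) by (apply Hm; lra).
    assert (F x <= L) by (apply HL1; exists x; split; auto; lra).
    apply Rabs_def1; lra.
  - exfalso. assert (L <= L - eps); [|lra].
    apply HL2. intros r [x [Hx ->]].
    destruct (Rle_or_lt (F x) (L - eps)); auto.
    exfalso; apply Hn; exists x; auto.
Qed.

Lemma deriv_limL_zero (F dF : R -> R) x1 L D :
  (forall x, x < x1 -> is_derive F x (dF x)) -> limL F L -> limL dF D -> D = 0.
Proof.
  intros Hd HF HdF.
  destruct (Req_dec D 0) as [|HD]; auto. exfalso.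
  assert (HaD : 0 < Rabs D) by (apply Rabs_pos_lt; auto).
  destruct (HF 1 ltac:(lra)) as [M1 HM1].
  destruct (HdF (Rabs D / 2) ltac:(lra)) as [M2 HM2].
  set (y := Rmin x1 (Rmin M1 M2) - 1).
  assert (Hy1 : y < x1) by (unfold y; generalize (Rmin_l x1 (Rmin M1 M2)); lra).
  assert (Hy2 : y < M1) by (unfold y; generalize (Rmin_r x1 (Rmin M1 M2)) (Rmin_l M1 M2); lra).
  assert (Hy3 : y < M2) by (unfold y; generalize (Rmin_r x1 (Rmin M1 M2)) (Rmin_r M1 M2); lra).
  set (x := y - 4 / Rabs D).
  assert (Hxy : x < y) by (unfold x; assert (0 < 4 / Rabs D) by (apply Rdiv_lt_0_compat; lra); lra).
  destruct (MVT_cor2 F dF x y Hxy) as [c [Hc Hxc]].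
  { intros t Ht; apply is_derive_Reals; apply Hd; lra. }
  pose proof (HM1 y Hy2). pose proof (HM1 x ltac:(lra)).
  pose proof (HM2 c ltac:(lra)).
  assert (Habs : Rabs (F y - F x) < 2).
  { replace (F y - F x) with ((F y - L) - (F x - L)) by ring.
    unfold Rminus at 1. eapply Rle_lt_trans. apply Rabs_triang. rewrite Rabs_Ropp. lra. }
  rewrite Hc in Habs. rewrite Rabs_mult in Habs.
  rewrite (Rabs_pos_eq (y - x)) in Habs by lra.
  replace (y - x) with (4 / Rabs D) in Habs by (unfold x; ring).
  assert (Rabs (dF c) > Rabs D / 2).
  { pose proof (Rabs_triang_inv D (D - dF c)).
    replace (D - (D - dF c)) with (dF c) in H2 by ring.
    rewrite Rabs_minus_sym in H1. lra. }
  assert (Rabs (dF c) * (4 / Rabs D) > Rabs D / 2 * (4 / Rabs D)).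
  { apply Rmult_gt_compat_r; auto. apply Rdiv_lt_0_compat; lra. }
  replace (Rabs D / 2 * (4 / Rabs D)) with 2 in H3 by (field; lra). lra.
Qed.


Lemma mvt_ge (F dF : R -> R) a b : a <= b ->
  (forall x, a <= x <= b -> is_derive F x (dF x)) ->
  (forall x, a < x < b -> dF x <= 0) -> F b <= F a.
Proof.
  intros Hab Hd Hp. destruct (Req_dec a b) as [->|Hne]; [lra|].
  destruct (MVT_cor2 F dF a b) as [c [Hc Hac]]; [lra| |].
  { intros; apply is_derive_Reals; auto. }
  specialize (Hp c Hac). nra.
Qed.

Lemma mvt_strict_neg (F dF : R -> R) a b : a < b ->
  (forall x, a <= x <= b -> is_derive F x (dF x)) ->
  (forall x, a < x < b -> dF x < 0) -> F b < F a.
Proof.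
  intros Hab Hd Hp.
  destruct (MVT_cor2 F dF a b Hab) as [c [Hc Hac]].
  { intros; apply is_derive_Reals; auto. }
  specialize (Hp c Hac). nra.
Qed.

Lemma is_derive_neginv (g : R -> R) x l : is_derive g x l -> g x <> 0 ->
  is_derive (fun y => - / g y) x (l / (g x)^2).
Proof.
  intros H Hg. pose proof (is_derive_inv g x l H Hg) as H2.
  apply is_derive_opp in H2.
  change (is_derive (fun y => - / g y) x (- (- l / g x ^ 2))) in H2.
  replace (l / g x ^ 2) with (- (- l / g x ^ 2)) by (field; auto). exact H2.
Qed.

Lemma ric_lower (g phi : R -> R) k beta x1 B : 0 < beta ->
  (forall x, x < x1 -> is_derive g x (phi x + k * g x + beta * (g x)^2)) ->
  (forall x, x < x1 -> Rabs (phi x) <= B) ->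
  (forall x y, x <= y < x1 -> g x <= g y) ->
  exists K, forall x, x < x1 -> - K <= g x.
Proof.
  intros Hb Hd HB Hm.
  set (K0 := 1 + 2 * (Rabs k + B) / beta).
  assert (HB0 : 0 <= B) by (assert (x1 - 1 < x1) by lra; specialize (HB _ H); pose proof (Rabs_pos (phi (x1 - 1))); lra).
  assert (HK0 : 1 <= K0).
  { unfold K0. assert (0 <= 2 * (Rabs k + B) / beta); [|lra].
    apply Rdiv_le_0_compat; [|lra]. pose proof (Rabs_pos k). lra. }
  exists K0. intros x0 Hx0.
  destruct (Rle_or_lt (- K0) (g x0)) as [|Hlt]; auto. exfalso.
  assert (Key : forall x, x <= x0 -> beta / 2 * (g x)^2 <= phi x + k * g x + beta * (g x)^2 /\ g x < - K0).
  { intros x Hx. assert (Hgx : g x < - K0) by (assert (g x <= g x0) by (apply Hm; lra); lra).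
    split; auto.
    pose proof (HB x ltac:(lra)) as Hp. apply Rabs_le_between in Hp.
    pose proof (Rle_abs k). pose proof (Rle_abs (-k)). rewrite Rabs_Ropp in H0.
    assert (Hy : beta / 2 * (g x)^2 >= (Rabs k + B) * (- g x)).
    { assert (beta / 2 * (- g x) >= Rabs k + B).
      { assert (beta / 2 * K0 >= Rabs k + B).
        { unfold K0. replace (beta / 2 * (1 + 2 * (Rabs k + B) / beta)) with (beta/2 + (Rabs k + B)) by (field; lra). lra. }
        nra. }
      nra. }
    nra. }
  set (h := fun y => - / g y).
  assert (Hdh : forall x, x <= x0 -> is_derive h x ((phi x + k * g x + beta * (g x)^2) / (g x)^2)).
  { intros x Hx. apply is_derive_neginv. apply Hd; lra.
    destruct (Key x Hx). lra. }
  assert (Hh0 : 0 < h x0) by (unfold h; destruct (Key x0 ltac:(lra)); assert (0 < / - g x0) by (apply Rinv_0_lt_compat; lra); rewrite <- Ropp_inv_permute in H1 by lra; lra).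
  set (x := x0 - 2 * h x0 / beta - 1).
  assert (Hx : x < x0) by (unfold x; assert (0 < 2 * h x0 / beta) by (apply Rdiv_lt_0_compat; lra); lra).
  destruct (MVT_cor2 h (fun t => (phi t + k * g t + beta * (g t)^2) / (g t)^2) x x0 Hx) as [c [Hc Hxc]].
  { intros t Ht; apply is_derive_Reals; apply Hdh; lra. }
  destruct (Key c ltac:(lra)) as [K1 K2].
  assert (Hg2 : 0 < g c ^ 2) by (nra).
  assert (Hq : beta / 2 <= (phi c + k * g c + beta * g c ^ 2) / g c ^ 2).
  { replace (beta / 2) with ((beta / 2 * g c ^ 2) / g c ^ 2) by (field; lra).
    unfold Rdiv. apply Rmult_le_compat_r; [left; apply Rinv_0_lt_compat; lra| lra]. }
  assert (Hhx : 0 < h x).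
  { destruct (Key x ltac:(lra)). unfold h.
    assert (0 < / - g x) by (apply Rinv_0_lt_compat; lra); rewrite <- Ropp_inv_permute in H1 by lra; lra. }
  assert (h x0 - h x >= beta / 2 * (x0 - x)) by (rewrite Hc; apply Rle_ge; apply Rmult_le_compat_r; lra).
  replace (x0 - x) with (2 * h x0 / beta + 1) in H by (unfold x; ring).
  replace (beta / 2 * (2 * h x0 / beta + 1)) with (h x0 + beta / 2) in H by (field; lra).
  lra.
Qed.

Lemma limL_ric (g phi : R -> R) k beta phi0 G :
  limL phi phi0 -> limL g G ->
  limL (fun x => phi x + k * g x + beta * (g x)^2) (phi0 + k * G + beta * G^2).
Proof.
  intros Hp Hg. apply is_lim_limL.
  apply limL_is_lim in Hp. apply limL_is_lim in Hg.
  assert (H2 : is_lim (fun x => g x * g x) m_infty (G * G)).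
  { apply (is_lim_mult g g m_infty G G Hg Hg). simpl. auto. }
  assert (H3 : is_lim (fun x => phi x + k * g x + beta * (g x * g x)) m_infty (phi0 + k * G + beta * (G * G))).
  { apply is_lim_plus'. apply is_lim_plus'. auto.
    apply (is_lim_scal_l g k m_infty G Hg).
    apply (is_lim_scal_l _ beta m_infty (G*G) H2). }
  replace (phi0 + k * G + beta * G ^ 2) with (phi0 + k * G + beta * (G * G)) by ring.
  eapply is_lim_ext; [|apply H3]. intros y. cbv beta. ring.
Qed.

Lemma limL_opp (g : R -> R) G : limL (fun x => - g x) G -> limL g (- G).
Proof.
  intros H eps He. destruct (H eps He) as [M HM]. exists M. intros x Hx.
  specialize (HM x Hx). rewrite <- Rabs_Ropp. replace (- (g x - - G)) with (- g x - G) by ring. auto.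
Qed.

Lemma ric_end (g phi : R -> R) k beta phi0 x1 : 0 < beta ->
  (forall x, x < x1 -> is_derive g x (phi x + k * g x + beta * (g x)^2)) ->
  limL phi phi0 ->
  ((forall x, x < x1 -> phi x + k * g x + beta * (g x)^2 < 0) \/
   (forall x, x < x1 -> 0 < phi x + k * g x + beta * (g x)^2)) ->
  exists G, limL g G /\ phi0 + k * G + beta * G^2 = 0.
Proof.
  intros Hb Hd Hp Hs.
  destruct (Hp 1 ltac:(lra)) as [M0 HM0].
  set (x2 := Rmin x1 M0).
  assert (Hx21 : x2 <= x1) by apply Rmin_l.
  assert (Hx22 : x2 <= M0) by apply Rmin_r.
  set (B := Rabs phi0 + 1).
  assert (HB : forall x, x < x2 -> Rabs (phi x) <= B).
  { intros x Hx. specialize (HM0 x ltac:(lra)). unfold B.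
    pose proof (Rabs_triang_inv (phi x) phi0). lra. }
  assert (HG : exists G, limL g G).
  { destruct Hs as [Hs|Hs].
    -
      set (K := 1 + (Rabs k + B) / beta).
      assert (Hup : forall x, x <= x2 - 1 -> g x <= K).
      { intros x Hx. specialize (Hs x ltac:(lra)). specialize (HB x ltac:(lra)).
        destruct (Rle_or_lt (g x) K) as [|Hgt]; auto. exfalso.
        apply Rabs_le_between in HB.
        pose proof (Rle_abs k). pose proof (Rle_abs (-k)). rewrite Rabs_Ropp in H0.
        assert (HK : beta * K = beta + Rabs k + B) by (unfold K; field; lra).
        assert (0 <= (Rabs k + B) / beta) by (apply Rdiv_le_0_compat; [pose proof (Rabs_pos k); lra| lra]).
        assert (HK1 : 1 <= K) by (unfold K; lra).
        assert (0 < beta * g x * (g x - K)) by (apply Rmult_lt_0_compat; [apply Rmult_lt_0_compat|]; lra).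
        assert (k * g x >= - Rabs k * g x) by (apply Rle_ge; apply Rmult_le_compat_r; lra).
        assert (B * (g x - 1) >= 0) by (apply Rle_ge; apply Rmult_le_pos; lra).
        assert (beta * g x ^ 2 = beta * g x * (g x - K) + (beta * K) * g x) by ring.
        rewrite HK in H5. nra. }
      destruct (mono_limL g (x2 - 1) K) as [G [_ HG]]; auto.
      intros x y Hxy. destruct (Req_dec x y) as [->|]; [lra|].
      apply (mvt_ge g (fun t => phi t + k * g t + beta * (g t)^2)); try lra.
      + intros t Ht; apply Hd; lra.
      + intros t Ht; left; apply Hs; lra.
      + exists G; auto.
    - (* increasing, bounded below by blow-up *)
      destruct (ric_lower g phi k beta x2 B) as [K HK]; auto.
      + intros x Hx; apply Hd; lra.
      + intros x y Hxy. apply (mvt_le g (fun t => phi t + k * g t + beta * (g t)^2)); try lra.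
        * intros t Ht; apply Hd; lra.
        * intros t Ht; left; apply Hs; lra.
      + destruct (mono_limL (fun x => - g x) (x2 - 1) K) as [L [_ HL]].
        * intros x y Hxy. cbv beta.
          assert (g x <= g y); [|lra].
          apply (mvt_le g (fun t => phi t + k * g t + beta * (g t)^2)); try lra.
          -- intros t Ht; apply Hd; lra.
          -- intros t Ht; left; apply Hs; lra.
        * intros x Hx. specialize (HK x ltac:(lra)). lra.
        * exists (- L). apply limL_opp; auto. }
  destruct HG as [G HG]. exists G. split; auto.
  apply (deriv_limL_zero g (fun x => phi x + k * g x + beta * (g x)^2) x1 G); auto.
  apply limL_ric; auto.
Qed.


Lemma RInt_exp_bound C d a b : 0 < d -> 0 <= C -> a <= b ->
  RInt (fun x => C * exp (d * x)) a b <= C / d * exp (d * b).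
Proof.
  intros Hd HC Hab.
  assert (H : is_RInt (fun x => C * exp (d * x)) a b (minus (C / d * exp (d * b)) (C / d * exp (d * a)))).
  { apply (is_RInt_derive (fun x => C / d * exp (d * x))).
    - intros x _. auto_derive; auto. field. lra.
    - intros x _. apply (@ex_derive_continuous R_AbsRing R_NormedModule). auto_derive; auto. }
  rewrite (is_RInt_unique _ _ _ _ H). change (minus ?u ?v) with (u - v).
  assert (0 <= C / d * exp (d * a)). { apply Rmult_le_pos. apply Rdiv_le_0_compat; lra. left; apply exp_pos. }
  lra.
Qed.

Lemma exRc (h : R -> R) a b : (forall x, continuous h x) -> ex_RInt h a b.
Proof. intros Hc. apply (@ex_RInt_continuous R_CompleteNormedModule). intros; auto. Qed.

Lemma RInt_nonneg (h : R -> R) a b : a <= b -> (forall x, continuous h x) ->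
  (forall x, a <= x <= b -> 0 <= h x) -> 0 <= RInt h a b.
Proof.
  intros Hab Hc Hp. apply RInt_ge_0; auto.
  apply exRc; auto.
  intros x Hx; apply Hp; lra.
Qed.

Lemma is_RInt_gen_limL (h : R -> R) x0 L : (forall x, continuous h x) ->
  limL (fun a => RInt h a x0) L ->
  is_RInt_gen h (Rbar_locally m_infty) (at_point x0) L.
Proof.
  intros Hc HL P [eps HP].
  destruct (HL eps (cond_pos eps)) as [M HM].
  apply (Filter_prod _ _ _ (fun a => a < M) (fun b => b = x0)).
  - exists M; auto.
  - reflexivity.
  - intros a b Ha ->. exists (RInt h a x0). split.
    + apply (@RInt_correct R_CompleteNormedModule). apply exRc; auto.
    + apply HP. apply HM; auto.
Qed.

Lemma is_RInt_gen_limR (h : R -> R) x0 L : (forall x, continuous h x) ->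
  limR (fun b => RInt h x0 b) L ->
  is_RInt_gen h (at_point x0) (Rbar_locally p_infty) L.
Proof.
  intros Hc HL P [eps HP].
  destruct (HL eps (cond_pos eps)) as [M HM].
  apply (Filter_prod _ _ _ (fun a => a = x0) (fun b => M < b)).
  - reflexivity.
  - exists M; auto.
  - intros a b -> Hb. exists (RInt h x0 b). split.
    + apply (@RInt_correct R_CompleteNormedModule). apply exRc; auto.
    + apply HP. apply HM; auto.
Qed.

Lemma RInt_exp_bound2 C d a b : 0 < d -> 0 <= C -> a <= b ->
  RInt (fun x => C * exp (- d * x)) a b <= C / d * exp (- d * a).
Proof.
  intros Hd HC Hab.
  assert (H : is_RInt (fun x => C * exp (- d * x)) a b (minus (- (C / d) * exp (- d * b)) (- (C / d) * exp (- d * a)))).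
  { apply (is_RInt_derive (fun x => - (C / d) * exp (- d * x))).
    - intros x _. auto_derive; auto. field. lra.
    - intros x _. apply (@ex_derive_continuous R_AbsRing R_NormedModule). auto_derive; auto. }
  rewrite (is_RInt_unique _ _ _ _ H). change (minus ?u ?v) with (u - v).
  assert (0 <= C / d * exp (- d * b)). { apply Rmult_le_pos. apply Rdiv_le_0_compat; lra. left; apply exp_pos. }
  lra.
Qed.

Lemma intL_exp (h : R -> R) x0 C d b : 0 < d -> (forall x, continuous h x) ->
  (forall x, x <= x0 -> 0 <= h x <= C * exp (d * x)) ->
  ex_RInt_gen h (Rbar_locally m_infty) (at_point b).
Proof.
  intros Hd Hc Hb.
  assert (HC : 0 <= C).
  { destruct (Hb x0 ltac:(lra)). pose proof (exp_pos (d * x0)).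
    destruct (Rle_or_lt 0 C); auto. nra. }
  destruct (mono_limL (fun a => RInt h a x0) x0 (C / d * exp (d * x0))) as [L [_ HL]].
  - intros x y Hxy.
    rewrite <- (RInt_Chasles h x y x0) by (apply exRc; auto).
    change (plus ?u ?v) with (u + v).
    assert (0 <= RInt h x y); [|lra].
    apply RInt_nonneg; auto; [lra|]. intros t Ht; apply Hb; lra.
  - intros x Hx. eapply Rle_trans; [|apply (RInt_exp_bound C d x x0); auto].
    apply RInt_le; auto.
    + apply exRc; auto.
    + apply exRc. intros t. apply (@ex_derive_continuous R_AbsRing R_NormedModule). auto_derive; auto.
    + intros t Ht; apply Hb; lra.
  - apply (ex_RInt_gen_Chasles h x0).
    + exists L. apply is_RInt_gen_limL; auto.
    + apply (proj2 (@ex_RInt_gen_at_point R_CompleteNormedModule h _ _)). apply exRc; auto.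
Qed.

Lemma intR_exp (h : R -> R) x0 C d b : 0 < d -> (forall x, continuous h x) ->
  (forall x, x0 <= x -> 0 <= h x <= C * exp (- d * x)) ->
  ex_RInt_gen h (at_point b) (Rbar_locally p_infty).
Proof.
  intros Hd Hc Hb.
  assert (HC : 0 <= C).
  { destruct (Hb x0 ltac:(lra)). pose proof (exp_pos (- d * x0)).
    destruct (Rle_or_lt 0 C); auto. nra. }
  destruct (mono_limL (fun t => RInt h x0 (- t)) (- x0) (C / d * exp (- d * x0))) as [L [_ HL]].
  - intros x y Hxy.
    rewrite <- (RInt_Chasles h x0 (- y) (- x)) by (apply exRc; auto).
    change (plus ?u ?v) with (u + v).
    assert (0 <= RInt h (- y) (- x)); [|lra].
    apply RInt_nonneg; auto; [lra|]. intros t Ht; apply Hb; lra.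
  - intros x Hx. eapply Rle_trans; [|apply (RInt_exp_bound2 C d x0 (- x)); auto; lra].
    apply RInt_le; [lra| | |].
    + apply exRc; auto.
    + apply exRc. intros t. apply (@ex_derive_continuous R_AbsRing R_NormedModule). auto_derive; auto.
    + intros t Ht; apply Hb; lra.
  - apply (ex_RInt_gen_Chasles h x0).
    + apply (proj2 (@ex_RInt_gen_at_point R_CompleteNormedModule h _ _)). apply exRc; auto.
    + exists L. apply is_RInt_gen_limR; auto.
      intros eps He. destruct (HL eps He) as [M HM]. exists (- M). intros x Hx.
      specialize (HM (- x) ltac:(lra)). cbv beta in HM. rewrite Ropp_involutive in HM. auto.
Qed.


Lemma dval (f : R -> R) (x l l' : R) : is_derive f x l -> l = l' -> is_derive f x l'.
Proof. intros H ->; auto. Qed.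

Lemma dmul (f g : R -> R) x a b : is_derive f x a -> is_derive g x b ->
  is_derive (fun t => f t * g t) x (a * g x + f x * b).
Proof. intros Hf Hg. apply (is_derive_mult f g x a b Hf Hg). intros; apply Rmult_comm. Qed.

Lemma dplus (f g : R -> R) x a b : is_derive f x a -> is_derive g x b ->
  is_derive (fun t => f t + g t) x (a + b).
Proof. intros Hf Hg. apply (is_derive_plus f g x a b Hf Hg). Qed.

Lemma dminus (f g : R -> R) x a b : is_derive f x a -> is_derive g x b ->
  is_derive (fun t => f t - g t) x (a - b).
Proof. intros Hf Hg. apply (is_derive_minus f g x a b Hf Hg). Qed.

Lemma dscal (f : R -> R) x k a : is_derive f x a -> is_derive (fun t => k * f t) x (k * a).
Proof. apply is_derive_scal. Qed.

Lemma dcomp (f g : R -> R) x a b : is_derive f (g x) a -> is_derive g x b ->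
  is_derive (fun t => f (g t)) x (b * a).
Proof. intros Hf Hg. apply (is_derive_comp f g x a b Hf Hg). Qed.

Lemma dexp_lin k x : is_derive (fun t => exp (k * t)) x (k * exp (k * x)).
Proof. apply (dval _ _ (exp (k*x) * k)). auto_derive. exact I. ring. apply Rmult_comm. Qed.

Lemma dopp (f : R -> R) x a : is_derive f x a -> is_derive (fun t => - f t) x (- a).
Proof. intros H. apply (is_derive_opp f x a H). Qed.

Lemma cont_mul (f g : R -> R) x : continuous f x -> continuous g x -> continuous (fun t => f t * g t) x.
Proof. intros Hf Hg. apply (continuous_mult f g x Hf Hg). Qed.

Lemma cont_plus (f g : R -> R) x : continuous f x -> continuous g x -> continuous (fun t => f t + g t) x.
Proof. intros Hf Hg. apply (@continuous_plus R_UniformSpace R_AbsRing R_NormedModule f g x Hf Hg). Qed.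

Lemma cont_der (f : R -> R) x l : is_derive f x l -> continuous f x.
Proof. intros H. apply (@ex_derive_continuous R_AbsRing R_NormedModule). exists l; auto. Qed.

Lemma limL_comp_cont (v phi : R -> R) v0 : limL v v0 -> continuous phi v0 -> limL (fun x => phi (v x)) (phi v0).
Proof. intros H Hc. apply is_lim_limL. apply is_lim_comp_continuous; auto. apply limL_is_lim; auto. Qed.

Lemma limR_comp_cont (v phi : R -> R) v0 : limR v v0 -> continuous phi v0 -> limR (fun x => phi (v x)) (phi v0).
Proof. intros H Hc. apply is_lim_limR. apply is_lim_comp_continuous; auto. apply limR_is_lim; auto. Qed.

Lemma dneg x : is_derive (fun t : R => - t) x (-1).
Proof. apply (dval _ _ (-1)). auto_derive. exact I. lra. lra. Qed.

Lemma ric_endR (g phi : R -> R) k beta phi0 x1 : 0 < beta ->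
  (forall x, x1 < x -> is_derive g x (phi x + k * g x + beta * (g x)^2)) ->
  limR phi phi0 ->
  ((forall x, x1 < x -> phi x + k * g x + beta * (g x)^2 < 0) \/
   (forall x, x1 < x -> 0 < phi x + k * g x + beta * (g x)^2)) ->
  exists G, limR g G /\ phi0 + k * G + beta * G^2 = 0.
Proof.
  intros Hb Hd Hp Hs.
  destruct (ric_end (fun x => - g (- x)) (fun x => phi (- x)) (- k) beta phi0 (- x1)) as [G [HG HR]]; auto.
  - intros x Hx. apply (dval _ _ (- (-1 * (phi (- x) + k * g (- x) + beta * (g (- x))^2)))).
    + apply dopp. apply (dcomp g (fun t => - t)). apply Hd; lra. apply dneg.
    + ring.
  - intros eps He. destruct (Hp eps He) as [M HM]. exists (- M). intros x Hx. apply HM. lra.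
  - destruct Hs as [Hs|Hs]; [left|right]; intros x Hx; specialize (Hs (- x) ltac:(lra));
    replace (phi (- x) + - k * - g (- x) + beta * (- g (- x)) ^ 2) with (phi (- x) + k * g (- x) + beta * g (- x) ^ 2) by ring; auto.
  - exists (- G). split.
    + intros eps He. destruct (HG eps He) as [M HM]. exists (- M). intros x Hx.
      specialize (HM (- x) ltac:(lra)). rewrite Ropp_involutive in HM.
      rewrite <- Rabs_Ropp. replace (- (g x - - G)) with (- g x - G) by ring. auto.
    + rewrite <- HR. ring.
Qed.


Lemma dconst (a x : R) : is_derive (fun _ : R => a) x 0.
Proof. apply (is_derive_const a x). Qed.

Lemma cont_pt (f : R -> R) x : continuous f x -> continuity_pt f x.
Proof. intros H. apply continuity_pt_filterlim. exact H. Qed.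

Lemma lipschitz01 (f df : R -> R) : (forall y, is_derive f y (df y)) -> (forall y, continuous df y) ->
  exists Lf, 0 <= Lf /\ forall x y, 0 <= x <= 1 -> 0 <= y <= 1 -> Rabs (f x - f y) <= Lf * Rabs (x - y).
Proof.
  intros Hd Hc.
  destruct (continuity_ab_maj (fun t => Rabs (df t)) 0 1) as [Mx [HM _]]; [lra|..].
  { intros t _. apply (continuity_pt_comp df Rabs). apply cont_pt; auto. apply Rcontinuity_abs. }
  exists (Rabs (df Mx)). split; [apply Rabs_pos|].
  assert (Hgen : forall x y, 0 <= x <= 1 -> 0 <= y <= 1 -> x < y -> Rabs (f x - f y) <= Rabs (df Mx) * Rabs (x - y)).
  { intros x y Hx Hy Hxy.
    destruct (MVT_cor2 f df x y Hxy) as [c [Hc' Hxc]].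
    { intros; apply is_derive_Reals; auto. }
    rewrite <- Rabs_Ropp. replace (- (f x - f y)) with (f y - f x) by ring. rewrite Hc'.
    rewrite Rabs_mult. rewrite (Rabs_minus_sym x y). apply Rmult_le_compat_r. apply Rabs_pos.
    apply HM; lra. }
  intros x y Hx Hy. destruct (Rtotal_order x y) as [H|[H|H]].
  - auto.
  - subst. replace (f y - f y) with 0 by ring. replace (y - y) with 0 by ring. rewrite Rabs_R0. lra.
  - rewrite (Rabs_minus_sym x y), (Rabs_minus_sym (f x) (f y)). auto.
Qed.

Lemma p_pos nu b c (f df v p q : R -> R) : 0 < nu -> 0 < b ->
  (forall y, is_derive f y (df y)) -> (forall y, continuous df y) ->
  (forall x, is_derive v x (p x)) -> (forall x, is_derive p x (q x)) ->
  (forall x, c * p x = nu * q x + b * f (v x)) ->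
  (forall x, 0 <= v x <= 1) -> (forall x, 0 <= p x) ->
  limL v 0 -> limR v 1 -> forall x, 0 < p x.
Proof.
  intros Hnu Hb Hdf Hcf Hdv Hdp Hode H01 Hp0 HL HR x0.
  destruct (Rle_lt_or_eq_dec 0 (p x0) (Hp0 x0)) as [|Heq]; auto. exfalso.
  assert (Hq0 : q x0 = 0).
  { apply (deriv_min_zero p x0). intros y. rewrite <- Heq. auto. auto. }
  set (e := v x0).
  assert (Hfe : f e = 0).
  { pose proof (Hode x0). rewrite <- Heq, Hq0 in H.
    assert (b * f (v x0) = 0) by lra. unfold e. destruct (Rmult_integral _ _ H0); lra. }
  destruct (lipschitz01 f df Hdf Hcf) as [Lf [HLf HLip]].
  set (K := 1 + 2 * Rabs c / nu + b * Lf / nu).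
  set (E := fun x => (v x - e) * (v x - e) + p x * p x).
  set (dE := fun x => 2 * (v x - e) * p x + 2 * p x * q x).
  assert (HdE : forall x, is_derive E x (dE x)).
  { intros x. unfold E, dE.
    apply (dval _ _ ((p x - 0) * (v x - e) + (v x - e) * (p x - 0) + (q x * p x + p x * q x))).
    - apply dplus.
      + apply (dmul (fun t => v t - e) (fun t => v t - e)); apply dminus; [apply Hdv|exact (dconst e x)|apply Hdv|exact (dconst e x)].
      + apply (dmul p p); apply Hdp.
    - ring. }
  assert (HE0 : forall x, 0 <= E x).
  { intros x; unfold E. pose proof (Rle_0_sqr (v x - e)). pose proof (Rle_0_sqr (p x)). unfold Rsqr in *. lra. }
  assert (Hbound : forall x, Rabs (dE x) <= K * E x).
  { intros x. unfold dE, E, K.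
    set (W := v x - e). set (P := p x). set (Q := q x).
    assert (HP : 0 <= P) by apply Hp0.
    assert (HQ : nu * Rabs Q <= Rabs c * P + b * Lf * Rabs W).
    { assert (nu * Q = c * P - b * (f (v x) - f e)) by (unfold P, Q; rewrite Hfe; pose proof (Hode x); lra).
      rewrite <- (Rabs_pos_eq nu) by lra. rewrite <- Rabs_mult. rewrite H.
      replace (c * P - b * (f (v x) - f e)) with (c * P + - (b * (f (v x) - f e))) by ring.
      eapply Rle_trans. apply Rabs_triang. rewrite Rabs_Ropp, !Rabs_mult.
      rewrite (Rabs_pos_eq P), (Rabs_pos_eq b) by lra.
      pose proof (HLip (v x) e (H01 x) (H01 x0)) as HL1. fold W in HL1.
      assert (b * Rabs (f (v x) - f e) <= b * (Lf * Rabs W)) by (apply Rmult_le_compat_l; lra).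
      lra. }
    assert (HA : Rabs (2 * W * P + 2 * P * Q) <= 2 * Rabs W * P + 2 * P * Rabs Q).
    { eapply Rle_trans. apply Rabs_triang. rewrite !Rabs_mult.
      rewrite (Rabs_pos_eq 2), (Rabs_pos_eq P) by lra. lra. }
    assert (HW2 : Rabs W * Rabs W = W * W) by (rewrite <- Rabs_mult; apply Rabs_pos_eq; apply Rle_0_sqr).
    assert (HWP : 2 * Rabs W * P <= W * W + P * P).
    { pose proof (Rle_0_sqr (Rabs W - P)). unfold Rsqr in H. 
      replace ((Rabs W - P) * (Rabs W - P)) with (Rabs W * Rabs W - 2 * Rabs W * P + P * P) in H by ring. lra. }
    assert (HPQ : 2 * P * Rabs Q <= 2 * Rabs c / nu * (P * P) + b * Lf / nu * (W * W + P * P)).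
    { assert (2 * P * (nu * Rabs Q) <= 2 * P * (Rabs c * P + b * Lf * Rabs W)) by (apply Rmult_le_compat_l; lra).
      assert (b * Lf * (2 * Rabs W * P) <= b * Lf * (W * W + P * P)).
      { apply Rmult_le_compat_l; [apply Rmult_le_pos|]; lra. }
      apply (Rmult_le_reg_l nu); auto.
      replace (nu * (2 * Rabs c / nu * (P * P) + b * Lf / nu * (W * W + P * P))) with
        (2 * Rabs c * (P * P) + b * Lf * (W * W + P * P)) by (field; lra).
      replace (nu * (2 * P * Rabs Q)) with (2 * P * (nu * Rabs Q)) by ring.
      replace (2 * P * (Rabs c * P + b * Lf * Rabs W)) with (2 * Rabs c * (P * P) + b * Lf * (2 * Rabs W * P)) in H by ring.
      lra. }
    assert (0 <= 2 * Rabs c / nu * (W * W)).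
    { apply Rmult_le_pos; [apply Rdiv_le_0_compat; [pose proof (Rabs_pos c); lra| lra]|]. pose proof (Rle_0_sqr W); unfold Rsqr in *; lra. }
    replace ((1 + 2 * Rabs c / nu + b * Lf / nu) * (W * W + P * P)) with
      ((W * W + P * P) + 2 * Rabs c / nu * (P * P) + b * Lf / nu * (W * W + P * P) + 2 * Rabs c / nu * (W * W)) by ring.
    lra. }
  assert (HEx0 : E x0 = 0) by (unfold E; fold e; rewrite <- Heq; ring).
  assert (Hzero : forall x, E x = 0).
  { intros x. apply Rle_antisym; auto.
    destruct (Rle_or_lt x0 x) as [Hx|Hx].
    - assert (E x * exp (- K * x) <= E x0 * exp (- K * x0)).
      { apply (mvt_ge (fun t => E t * exp (- K * t)) (fun t => dE t * exp (- K * t) + E t * (- K * exp (- K * t)))); auto.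
        - intros t _. apply (dmul E (fun s => exp (- K * s))); [apply HdE|apply dexp_lin].
        - intros t _. pose proof (Hbound t). apply Rabs_le_between in H. pose proof (exp_pos (- K * t)).
          replace (dE t * exp (- K * t) + E t * (- K * exp (- K * t))) with (- ((K * E t - dE t) * exp (- K * t))) by ring.
          assert (0 <= (K * E t - dE t) * exp (- K * t)) by (apply Rmult_le_pos; lra). lra. }
      rewrite HEx0, Rmult_0_l in H. pose proof (exp_pos (- K * x)).
      apply (Rmult_le_reg_r (exp (- K * x))); auto. lra.
    - assert (E x * exp (K * x) <= E x0 * exp (K * x0)).
      { apply (mvt_le (fun t => E t * exp (K * t)) (fun t => dE t * exp (K * t) + E t * (K * exp (K * t)))); try lra.
        - intros t _. apply (dmul E (fun s => exp (K * s))); [apply HdE|apply dexp_lin].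
        - intros t _. pose proof (Hbound t). apply Rabs_le_between in H. pose proof (exp_pos (K * t)).
          replace (dE t * exp (K * t) + E t * (K * exp (K * t))) with ((K * E t + dE t) * exp (K * t)) by ring.
          apply Rmult_le_pos; lra. }
      rewrite HEx0, Rmult_0_l in H. pose proof (exp_pos (K * x)).
      apply (Rmult_le_reg_r (exp (K * x))); auto. lra. }
  assert (Hv : forall x, v x = e).
  { intros x. specialize (Hzero x). unfold E in Hzero.
    pose proof (Rle_0_sqr (v x - e)). pose proof (Rle_0_sqr (p x)). unfold Rsqr in *.
    assert ((v x - e) * (v x - e) = 0) by lra. destruct (Rmult_integral _ _ H1); lra. }
  assert (He0 : e = 0).
  { destruct (Req_dec e 0) as [|Hne]; auto. exfalso.
    destruct (HL (Rabs e) (Rabs_pos_lt _ Hne)) as [M HM]. specialize (HM (M - 1) ltac:(lra)).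
    rewrite Hv in HM. replace (e - 0) with e in HM by ring. lra. }
  destruct (HR (1/2) ltac:(lra)) as [M HM]. specialize (HM (M + 1) ltac:(lra)).
  rewrite Hv, He0 in HM. replace (0 - 1) with (- (1)) in HM by ring. rewrite Rabs_Ropp, Rabs_R1 in HM. lra.
Qed.


Lemma h_bound P Q Z F0 e1 er : 0 < P -> P <= F0 * er -> Rabs Q <= Z * P -> 0 <= e1 ->
  e1 * (P^2 + Q^2) <= (1 + Z^2) * F0^2 * (e1 * er^2).
Proof.
  intros HP HPF HQ He1.
  assert (HQ2 : Q^2 <= Z^2 * P^2).
  { assert (0 <= Rabs Q) by apply Rabs_pos.
    replace (Q^2) with (Rabs Q * Rabs Q) by (rewrite <- Rabs_mult; rewrite Rabs_pos_eq; [ring| pose proof (Rle_0_sqr Q); unfold Rsqr in *; lra]).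
    replace (Z^2 * P^2) with ((Z * P) * (Z * P)) by ring.
    apply Rmult_le_compat; lra. }
  assert (HP2 : P^2 <= F0^2 * er^2).
  { replace (P^2) with (P * P) by ring. replace (F0^2 * er^2) with ((F0 * er) * (F0 * er)) by ring.
    apply Rmult_le_compat; lra. }
  assert (H1 : P^2 + Q^2 <= (1 + Z^2) * P^2) by lra.
  assert (H2 : (1 + Z^2) * P^2 <= (1 + Z^2) * (F0^2 * er^2)).
  { apply Rmult_le_compat_l; [pose proof (pow2_ge_0 Z); lra | auto]. }
  replace ((1 + Z ^ 2) * F0 ^ 2 * (e1 * er ^ 2)) with (e1 * ((1 + Z^2) * (F0^2 * er^2))) by ring.
  apply Rmult_le_compat_l; lra.
Qed.

Lemma cont_h (p q : R -> R) A : (forall x, is_derive p x (q x)) -> (forall x, continuous q x) ->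
  forall x, continuous (fun x => exp (- 2 * A * x) * (p x ^ 2 + q x ^ 2)) x.
Proof.
  intros Hd Hc x. apply cont_mul.
  - apply (cont_der _ x _ (dexp_lin (-2 * A) x)).
  - apply cont_plus.
    + apply (cont_der _ x _ (is_derive_pow p 2 x (q x) (Hd x))).
    + apply (continuous_ext (fun t => q t * q t)). intros t; change (q t * q t = q t ^ 2); ring. apply cont_mul; auto.
Qed.

Lemma int_left (p q : R -> R) lam A : (forall x, is_derive p x (q x)) -> (forall x, continuous q x) ->
  (forall x, 0 < p x) -> limL (fun x => q x / p x) lam -> A < lam ->
  ex_RInt_gen (fun x => exp (- 2 * A * x) * (p x ^ 2 + q x ^ 2)) (Rbar_locally m_infty) (at_point 0).
Proof.
  intros Hd Hc Hp Hl HA.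
  set (eps := (lam - A) / 2).
  destruct (Hl eps ltac:(unfold eps; lra)) as [M HM].
  set (x0 := M - 1). set (r := A + eps).
  set (F := fun t => p t * exp (- r * t)).
  set (Z := Rabs lam + eps).
  assert (Hz : forall x, x < M -> r < q x / p x /\ Rabs (q x) <= Z * p x).
  { intros x Hx. specialize (HM x Hx). apply Rabs_def2 in HM. destruct HM as [H1 H2].
    split. unfold r, eps in *. lra.
    assert (Rabs (q x / p x) <= Z).
    { unfold Z. apply Rabs_le. pose proof (Rabs_pos lam). pose proof (Rle_abs lam). pose proof (Rle_abs (- lam)). rewrite Rabs_Ropp in H3. lra. }
    unfold Rdiv in H. rewrite Rabs_mult, Rabs_inv, (Rabs_pos_eq (p x)) in H by (left; auto).
    pose proof (Hp x).
    apply (Rmult_le_compat_r (p x)) in H; [|lra]. field_simplify in H; lra. }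
  assert (HF : forall x, x <= x0 -> F x <= F x0).
  { intros x Hx. apply (mvt_le F (fun t => q t * exp (- r * t) + p t * (- r * exp (- r * t)))); auto.
    - intros t _. apply (dmul p (fun s => exp (- r * s))); [apply Hd|apply dexp_lin].
    - intros t Ht. destruct (Hz t ltac:(unfold x0 in *; lra)) as [H1 _].
      pose proof (Hp t). pose proof (exp_pos (- r * t)).
      assert (r * p t < q t).
      { apply (Rmult_lt_compat_r (p t)) in H1; auto. field_simplify in H1; lra. }
      replace (q t * exp (- r * t) + p t * (- r * exp (- r * t))) with ((q t - r * p t) * exp (- r * t)) by ring.
      apply Rmult_le_pos; lra. }
  apply (intL_exp _ x0 ((1 + Z^2) * (F x0)^2) (2 * eps)).
  - unfold eps; lra.
  - apply cont_h; auto.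
  - intros x Hx. split.
    + apply Rmult_le_pos. left; apply exp_pos. pose proof (pow2_ge_0 (p x)). pose proof (pow2_ge_0 (q x)). lra.
    + replace (exp (2 * eps * x)) with (exp (- 2 * A * x) * exp (r * x) ^ 2).
      * apply h_bound; auto.
        -- specialize (HF x Hx). unfold F in HF.
           replace (p x) with (p x * exp (- r * x) * exp (r * x)).
           ++ apply Rmult_le_compat_r. left; apply exp_pos. auto.
           ++ rewrite Rmult_assoc, <- exp_plus. replace (- r * x + r * x) with 0 by ring. rewrite exp_0. ring.
        -- apply Hz. unfold x0 in Hx; lra.
        -- left; apply exp_pos.
      * replace (exp (r * x) ^ 2) with (exp (r * x + r * x)) by (rewrite exp_plus; ring).
        rewrite <- exp_plus. f_equal. unfold r; ring.
Qed.

Lemma int_right (p q : R -> R) mu A : (forall x, is_derive p x (q x)) -> (forall x, continuous q x) ->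
  (forall x, 0 < p x) -> limR (fun x => q x / p x) mu -> mu < A ->
  ex_RInt_gen (fun x => exp (- 2 * A * x) * (p x ^ 2 + q x ^ 2)) (at_point 0) (Rbar_locally p_infty).
Proof.
  intros Hd Hc Hp Hl HA.
  set (eps := (A - mu) / 2).
  destruct (Hl eps ltac:(unfold eps; lra)) as [M HM].
  set (x0 := M + 1). set (r := A - eps).
  set (F := fun t => p t * exp (- r * t)).
  set (Z := Rabs mu + eps).
  assert (Hz : forall x, M < x -> q x / p x < r /\ Rabs (q x) <= Z * p x).
  { intros x Hx. specialize (HM x Hx). apply Rabs_def2 in HM. destruct HM as [H1 H2].
    split. unfold r, eps in *. lra.
    assert (Rabs (q x / p x) <= Z).
    { unfold Z. apply Rabs_le. pose proof (Rabs_pos mu). pose proof (Rle_abs mu). pose proof (Rle_abs (- mu)). rewrite Rabs_Ropp in H3. lra. }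
    unfold Rdiv in H. rewrite Rabs_mult, Rabs_inv, (Rabs_pos_eq (p x)) in H by (left; auto).
    pose proof (Hp x).
    apply (Rmult_le_compat_r (p x)) in H; [|lra]. field_simplify in H; lra. }
  assert (HF : forall x, x0 <= x -> F x <= F x0).
  { intros x Hx. apply (mvt_ge F (fun t => q t * exp (- r * t) + p t * (- r * exp (- r * t)))); auto.
    - intros t _. apply (dmul p (fun s => exp (- r * s))); [apply Hd|apply dexp_lin].
    - intros t Ht. destruct (Hz t ltac:(unfold x0 in *; lra)) as [H1 _].
      pose proof (Hp t). pose proof (exp_pos (- r * t)).
      assert (q t < r * p t).
      { apply (Rmult_lt_compat_r (p t)) in H1; auto. field_simplify in H1; lra. }
      replace (q t * exp (- r * t) + p t * (- r * exp (- r * t))) with (- ((r * p t - q t) * exp (- r * t))) by ring.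
      assert (0 <= (r * p t - q t) * exp (- r * t)) by (apply Rmult_le_pos; lra). lra. }
  apply (intR_exp _ x0 ((1 + Z^2) * (F x0)^2) (2 * eps)).
  - unfold eps; lra.
  - apply cont_h; auto.
  - intros x Hx. split.
    + apply Rmult_le_pos. left; apply exp_pos. pose proof (pow2_ge_0 (p x)). pose proof (pow2_ge_0 (q x)). lra.
    + replace (exp (- (2 * eps) * x)) with (exp (- 2 * A * x) * exp (r * x) ^ 2).
      * apply h_bound; auto.
        -- specialize (HF x Hx). unfold F in HF.
           replace (p x) with (p x * exp (- r * x) * exp (r * x)).
           ++ apply Rmult_le_compat_r. left; apply exp_pos. auto.
           ++ rewrite Rmult_assoc, <- exp_plus. replace (- r * x + r * x) with 0 by ring. rewrite exp_0. ring.
        -- apply Hz. unfold x0 in Hx; lra.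
        -- left; apply exp_pos.
      * replace (exp (r * x) ^ 2) with (exp (r * x + r * x)) by (rewrite exp_plus; ring).
        rewrite <- exp_plus. f_equal. unfold r; ring.
Qed.


Lemma vbounds (v : R -> R) : (forall x y, x <= y -> v x <= v y) -> limL v 0 -> limR v 1 ->
  forall x, 0 <= v x <= 1.
Proof.
  intros Hm HL HR x. split.
  - destruct (Rle_or_lt 0 (v x)) as [|Hlt]; auto. exfalso.
    destruct (HL (- v x) ltac:(lra)) as [M HM].
    set (y := Rmin M x - 1).
    assert (y < M) by (unfold y; generalize (Rmin_l M x); lra).
    assert (y <= x) by (unfold y; generalize (Rmin_r M x); lra).
    specialize (HM y H). specialize (Hm y x H0). apply Rabs_def2 in HM. lra.
  - destruct (Rle_or_lt (v x) 1) as [|Hlt]; auto. exfalso.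
    destruct (HR (v x - 1) ltac:(lra)) as [M HM].
    set (y := Rmax M x + 1).
    assert (M < y) by (unfold y; generalize (Rmax_l M x); lra).
    assert (x <= y) by (unfold y; generalize (Rmax_r M x); lra).
    specialize (HM y H). specialize (Hm x y H0). apply Rabs_def2 in HM. lra.
Qed.

Lemma mono_le_limL (g : R -> R) x1 G : (forall z y, z <= y < x1 -> g y <= g z) -> limL g G ->
  forall y, y < x1 -> g y <= G.
Proof.
  intros Hm HL y Hy. destruct (Rle_or_lt (g y) G) as [|Hlt]; auto. exfalso.
  destruct (HL (g y - G) ltac:(lra)) as [M HM].
  set (z := Rmin M y - 1).
  assert (z < M) by (unfold z; generalize (Rmin_l M y); lra).
  assert (z <= y) by (unfold z; generalize (Rmin_r M y); lra).
  specialize (HM z H). specialize (Hm z y ltac:(lra)). apply Rabs_def2 in HM. lra.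
Qed.

Lemma mono_ge_limL (g : R -> R) x1 G : (forall z y, z <= y < x1 -> g z <= g y) -> limL g G ->
  forall y, y < x1 -> G <= g y.
Proof.
  intros Hm HL y Hy. destruct (Rle_or_lt G (g y)) as [|Hlt]; auto. exfalso.
  destruct (HL (G - g y) ltac:(lra)) as [M HM].
  set (z := Rmin M y - 1).
  assert (z < M) by (unfold z; generalize (Rmin_l M y); lra).
  assert (z <= y) by (unfold z; generalize (Rmin_r M y); lra).
  specialize (HM z H). specialize (Hm z y ltac:(lra)). apply Rabs_def2 in HM. lra.
Qed.

Lemma mono_ge_limR (g : R -> R) x1 G : (forall z y, x1 < z <= y -> g y <= g z) -> limR g G ->
  forall y, x1 < y -> G <= g y.
Proof.
  intros Hm HL y Hy. destruct (Rle_or_lt G (g y)) as [|Hlt]; auto. exfalso.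
  destruct (HL (G - g y) ltac:(lra)) as [M HM].
  set (z := Rmax M y + 1).
  assert (M < z) by (unfold z; generalize (Rmax_l M y); lra).
  assert (y <= z) by (unfold z; generalize (Rmax_r M y); lra).
  specialize (HM z H). specialize (Hm y z ltac:(lra)). apply Rabs_def2 in HM. lra.
Qed.

Lemma mono_le_limR (g : R -> R) x1 G : (forall z y, x1 < z <= y -> g z <= g y) -> limR g G ->
  forall y, x1 < y -> g y <= G.
Proof.
  intros Hm HL y Hy. destruct (Rle_or_lt (g y) G) as [|Hlt]; auto. exfalso.
  destruct (HL (g y - G) ltac:(lra)) as [M HM].
  set (z := Rmax M y + 1).
  assert (M < z) by (unfold z; generalize (Rmax_l M y); lra).
  assert (y <= z) by (unfold z; generalize (Rmax_r M y); lra).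
  specialize (HM z H). specialize (Hm y z ltac:(lra)). apply Rabs_def2 in HM. lra.
Qed.

Lemma limL_nonpos (g : R -> R) M G : (forall t, t < M -> g t < 0) -> limL g G -> G <= 0.
Proof.
  intros Hn HL. destruct (Rle_or_lt G 0) as [|Hlt]; auto. exfalso.
  destruct (HL G Hlt) as [M1 HM]. set (z := Rmin M M1 - 1).
  assert (z < M) by (unfold z; generalize (Rmin_l M M1); lra).
  assert (z < M1) by (unfold z; generalize (Rmin_r M M1); lra).
  specialize (HM z H0). specialize (Hn z H). apply Rabs_def2 in HM. lra.
Qed.

Lemma limR_nonneg (g : R -> R) M G : (forall t, M < t -> 0 < g t) -> limR g G -> 0 <= G.
Proof.
  intros Hn HL. destruct (Rle_or_lt 0 G) as [|Hlt]; auto. exfalso.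
  destruct (HL (- G) ltac:(lra)) as [M1 HM]. set (z := Rmax M M1 + 1).
  assert (M < z) by (unfold z; generalize (Rmax_l M M1); lra).
  assert (M1 < z) by (unfold z; generalize (Rmax_r M M1); lra).
  specialize (HM z H0). specialize (Hn z H). apply Rabs_def2 in HM. lra.
Qed.

Lemma quadL beta k f0 G y : 0 < beta -> f0 < 0 -> f0 + k * G + beta * G^2 = 0 -> G <= 0 -> y < G ->
  0 < f0 + k * y + beta * y^2.
Proof.
  intros Hb Hf HR HG Hy.
  assert (HG' : G < 0) by (destruct (Req_dec G 0); [subst; rewrite Rmult_0_r in HR; simpl in HR; lra| lra]).
  assert (E : f0 + k * y + beta * y^2 = (y - G) * (k + beta * (y + G))).
  { replace f0 with (- k * G - beta * G^2) by lra. ring. }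
  assert (H1 : G * (k + 2 * beta * G) > 0).
  { replace (G * (k + 2 * beta * G)) with (beta * G^2 - f0) by (replace f0 with (- k * G - beta * G^2) by lra; ring).
    pose proof (pow2_ge_0 G). assert (0 <= beta * G^2) by (apply Rmult_le_pos; lra). lra. }
  assert (H2 : k + 2 * beta * G < 0).
  { destruct (Rle_or_lt 0 (k + 2 * beta * G)); auto.
    assert (G * (k + 2 * beta * G) <= 0) by (apply Rmult_le_0_r; lra). lra. }
  assert (H3 : k + beta * (y + G) < 0).
  { assert (beta * (y + G) < beta * (2 * G)) by (apply Rmult_lt_compat_l; lra). lra. }
  rewrite E. assert (0 < (G - y) * (- (k + beta * (y + G)))) by (apply Rmult_lt_0_compat; lra). lra.
Qed.

Lemma quadR beta k f0 G y : 0 < beta -> f0 < 0 -> f0 + k * G + beta * G^2 = 0 -> 0 <= G -> G < y ->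
  0 < f0 + k * y + beta * y^2.
Proof.
  intros Hb Hf HR HG Hy.
  pose proof (quadL beta (- k) f0 (- G) (- y) Hb Hf) as Q.
  replace (f0 + - k * - G + beta * (- G) ^ 2) with (f0 + k * G + beta * G^2) in Q by ring.
  replace (f0 + - k * - y + beta * (- y) ^ 2) with (f0 + k * y + beta * y^2) in Q by ring.
  apply Q; auto; lra.
Qed.

Lemma gam_minus nu b c f0 G : 0 < nu -> 0 < b -> f0 < 0 ->
  f0 + - (c / nu) * G + b / nu * G^2 = 0 -> G <= 0 ->
  b / nu * G = c / (2 * nu) - sqrt ((c / (2 * nu)) ^ 2 - b / nu * f0).
Proof.
  intros Hnu Hb Hf HR HG.
  set (u := b / nu * G). set (w := c / (2 * nu)).
  set (D := w ^ 2 - b / nu * f0).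
  assert (Hbn : 0 < b / nu) by (apply Rdiv_lt_0_compat; lra).
  assert (HD : w ^ 2 < D) by (unfold D; assert (0 < b / nu * (- f0)) by (apply Rmult_lt_0_compat; lra); lra).
  pose proof (pow2_ge_0 w).
  set (s := sqrt D).
  assert (Hs2 : s * s = D) by (apply sqrt_sqrt; lra).
  assert (Hs0 : 0 <= s) by apply sqrt_pos.
  assert (Hu : u <= 0) by (unfold u; apply Rmult_le_0_l; lra).
  assert (Huu : u * u - 2 * w * u = - (b / nu) * f0).
  { replace (u * u - 2 * w * u) with (b / nu * (f0 + - (c / nu) * G + b / nu * G ^ 2) - b / nu * f0)
      by (unfold u, w; field; lra).
    rewrite HR. ring. }
  assert (Hprod : (u - w - s) * (u - w + s) = 0).
  { replace ((u - w - s) * (u - w + s)) with (u * u - 2 * w * u + w ^ 2 - s * s) by ring.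
    rewrite Huu, Hs2. unfold D. ring. }
  destruct (Rmult_integral _ _ Hprod) as [H1|H1]; [|lra].
  exfalso.
  assert (Hsw : Rabs w < s).
  { destruct (Rle_or_lt s (Rabs w)) as [Hle|]; auto. exfalso.
    assert (s * s <= Rabs w * Rabs w) by (apply Rmult_le_compat; lra).
    rewrite <- Rabs_mult, Rabs_pos_eq in H0 by (apply Rle_0_sqr).
    replace (w * w) with (w ^ 2) in H0 by ring. lra. }
  pose proof (Rle_abs (- w)). rewrite Rabs_Ropp in H0. lra.
Qed.

Lemma gam_plus nu b c f0 G : 0 < nu -> 0 < b -> f0 < 0 ->
  f0 + - (c / nu) * G + b / nu * G^2 = 0 -> 0 <= G ->
  b / nu * G = c / (2 * nu) + sqrt ((c / (2 * nu)) ^ 2 - b / nu * f0).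
Proof.
  intros Hnu Hb Hf HR HG.
  set (u := b / nu * G). set (w := c / (2 * nu)).
  set (D := w ^ 2 - b / nu * f0).
  assert (Hbn : 0 < b / nu) by (apply Rdiv_lt_0_compat; lra).
  assert (HD : w ^ 2 < D) by (unfold D; assert (0 < b / nu * (- f0)) by (apply Rmult_lt_0_compat; lra); lra).
  pose proof (pow2_ge_0 w).
  set (s := sqrt D).
  assert (Hs2 : s * s = D) by (apply sqrt_sqrt; lra).
  assert (Hs0 : 0 <= s) by apply sqrt_pos.
  assert (Hu : 0 <= u) by (unfold u; apply Rmult_le_pos; lra).
  assert (Huu : u * u - 2 * w * u = - (b / nu) * f0).
  { replace (u * u - 2 * w * u) with (b / nu * (f0 + - (c / nu) * G + b / nu * G ^ 2) - b / nu * f0)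
      by (unfold u, w; field; lra).
    rewrite HR. ring. }
  assert (Hprod : (u - w - s) * (u - w + s) = 0).
  { replace ((u - w - s) * (u - w + s)) with (u * u - 2 * w * u + w ^ 2 - s * s) by ring.
    rewrite Huu, Hs2. unfold D. ring. }
  destruct (Rmult_integral _ _ Hprod) as [H1|H1]; [lra|].
  exfalso.
  assert (Hsw : Rabs w < s).
  { destruct (Rle_or_lt s (Rabs w)) as [Hle|]; auto. exfalso.
    assert (s * s <= Rabs w * Rabs w) by (apply Rmult_le_compat; lra).
    rewrite <- Rabs_mult, Rabs_pos_eq in H0 by (apply Rle_0_sqr).
    replace (w * w) with (w ^ 2) in H0 by ring. lra. }
  pose proof (Rle_abs w). lra.
Qed.

Lemma limL_aff (g : R -> R) G a k : limL g G -> limL (fun x => a + k * g x) (a + k * G).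
Proof.
  intros H. apply is_lim_limL. apply limL_is_lim in H.
  apply (is_lim_plus' (fun _ => a) (fun x => k * g x)). apply is_lim_const.
  apply (is_lim_scal_l g k m_infty G H).
Qed.
Lemma limR_aff (g : R -> R) G a k : limR g G -> limR (fun x => a + k * g x) (a + k * G).
Proof.
  intros H. apply is_lim_limR. apply limR_is_lim in H.
  apply (is_lim_plus' (fun _ => a) (fun x => k * g x)). apply is_lim_const.
  apply (is_lim_scal_l g k p_infty G H).
Qed.
Lemma limL_ext (g h : R -> R) G : (forall x, g x = h x) -> limL g G -> limL h G.
Proof. intros E H eps He. destruct (H eps He) as [M HM]. exists M. intros x Hx. rewrite <- E. auto. Qed.
Lemma limR_ext (g h : R -> R) G : (forall x, g x = h x) -> limR g G -> limR h G.
Proof. intros E H eps He. destruct (H eps He) as [M HM]. exists M. intros x Hx. rewrite <- E. auto. Qed.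

Theorem proposition1p2
  (nu b : R) (f : R -> R) (a vstar : R) (vhat : R -> R) (c : R) :
  0 < nu -> 0 < b ->
  (forall v, ex_derive f v /\ continuous (Derive f) v) ->
  0 < a < 1 ->
  f 0 = 0 -> f a = 0 -> f 1 = 0 ->
  (forall v, 0 < v < a -> f v < 0) ->
  (forall v, a < v < 1 -> 0 < f v) ->
  Derive f 0 < 0 -> 0 < Derive f a -> Derive f 1 < 0 ->
  0 <= RInt f 0 1 ->
  (forall v, 0 <= v <= 1 -> ex_derive (Derive f) v) ->
  a < vstar < 1 ->
  (forall v, 0 <= v < vstar -> 0 < Derive (Derive f) v) ->
  (forall v, vstar < v <= 1 -> Derive (Derive f) v < 0) ->
  (forall x y, x <= y -> vhat x <= vhat y) ->
  (forall x, ex_derive vhat x /\ ex_derive (Derive vhat) x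
             /\ continuous (Derive (Derive vhat)) x) ->
  is_lim vhat m_infty 0 -> is_lim vhat p_infty 1 ->
  (forall x, c * Derive vhat x = nu * Derive (Derive vhat) x + b * f (vhat x)) ->
  ((forall x, 0 < Derive vhat x) /\
   (forall x y, x < y ->
      f (vhat x) / Derive vhat x < f (vhat y) / Derive vhat y) /\
   (forall x,
      ex_derive (fun y => f (vhat y) / Derive vhat y) x /\
      is_derive (fun y => Derive (Derive vhat) y / Derive vhat y) x
        (- (b / nu) * Derive (fun y => f (vhat y) / Derive vhat y) x) /\
      0 < Derive (fun y => f (vhat y) / Derive vhat y) x)) /\
  is_glb_Rbar (fun g => exists x, g = b / nu * (f (vhat x) / Derive vhat x))
              (Finite (gamma_minus nu b c f)) /\
  is_lub_Rbar (fun g => exists x, g = b / nu * (f (vhat x) / Derive vhat x))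
              (Finite (gamma_plus nu b c f)) /\
  (forall alpha, alpha * (c / nu) < c / nu - gamma_minus nu b c f ->
     ex_RInt_gen (fun x => exp (- 2 * alpha * (c / nu) * x)
                   * (Derive vhat x ^ 2 + Derive (Derive vhat) x ^ 2))
       (Rbar_locally m_infty) (at_point 0)) /\
  (forall alpha, alpha * (c / nu) > c / nu - gamma_plus nu b c f ->
     ex_RInt_gen (fun x => exp (- 2 * alpha * (c / nu) * x)
                   * (Derive vhat x ^ 2 + Derive (Derive vhat) x ^ 2))
       (at_point 0) (Rbar_locally p_infty)) /\
  ex_RInt_gen (fun x => exp (- (c / nu) * x)
                 * (Derive vhat x ^ 2 + Derive (Derive vhat) x ^ 2))
    (Rbar_locally m_infty) (Rbar_locally p_infty).
Proof.
  intros Hnu Hb Hf Ha Hf0 Hfa Hf1 Hneg Hpos Hd0 Hda Hd1 Hint Hf2ex Hvs Hf2p Hf2n Hmono Hv Hlm Hlp Hode.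
  unfold gamma_minus, gamma_plus.
  set (p := Derive vhat) in *. set (q := Derive p) in *.
  set (f1 := Derive f) in *. set (f2 := Derive f1) in *.
  set (v := vhat) in *.
  assert (Hdv : forall x, is_derive v x (p x)) by (intros x; apply Derive_correct; apply Hv).
  assert (Hdp : forall x, is_derive p x (q x)) by (intros x; apply Derive_correct; apply Hv).
  assert (Hcq : forall x, continuous q x) by (intros x; apply Hv).
  assert (Hdf : forall y, is_derive f y (f1 y)) by (intros y; apply Derive_correct; apply Hf).
  assert (Hcf1 : forall y, continuous f1 y) by (intros y; apply Hf).
  assert (Hdf1 : forall y, 0 <= y <= 1 -> is_derive f1 y (f2 y)) by (intros y Hy; apply Derive_correct; apply Hf2ex; auto).
  assert (HL : limL v 0) by (apply is_lim_limL; auto).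
  assert (HR : limR v 1) by (apply is_lim_limR; auto).
  assert (H01 : forall x, 0 <= v x <= 1) by (apply vbounds; auto).
  assert (Hp0 : forall x, 0 <= p x) by (intros x; apply (deriv_incr_nonneg v x); auto).
  assert (Hp : forall x, 0 < p x).
  { apply (p_pos nu b c f f1 v p q); auto. }
  assert (Hvinc : forall x y, x < y -> v x < v y).
  { intros x y Hxy. apply (mvt_strict v p); auto. }
  assert (Hv01 : forall x, 0 < v x < 1).
  { intros x. pose proof (Hvinc (x - 1) x ltac:(lra)). pose proof (Hvinc x (x + 1) ltac:(lra)).
    pose proof (H01 (x - 1)). pose proof (H01 (x + 1)). lra. }
  assert (Hq : forall x, q x = (c * p x - b * f (v x)) / nu).
  { intros x. pose proof (Hode x). assert (E : c * p x - b * f (v x) = nu * q x) by lra. rewrite E. field. lra. }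
  set (g := fun y => f (v y) / p y).
  set (k := - (c / nu)). set (beta := b / nu).
  assert (Hbeta : 0 < beta) by (unfold beta; apply Rdiv_lt_0_compat; lra).
  set (gd := fun x => f1 (v x) + k * g x + beta * (g x)^2).
  assert (Hdfv : forall x, is_derive (fun t => f (v t)) x (p x * f1 (v x))).
  { intros x. apply (dcomp f v); auto. }
  assert (Hdg : forall x, is_derive g x (gd x)).
  { intros x. pose proof (Hp x).
    apply (dval _ _ _ _ (is_derive_div (fun t => f (v t)) p x _ _ (Hdfv x) (Hdp x) ltac:(lra))).
    unfold gd, g, k, beta. rewrite Hq. field. split; lra. }
  set (HH := fun t => (f1 (v t) * (p t * p t) - c / nu * (f (v t) * p t) + b / nu * (f (v t) * f (v t))) * exp (- (c / nu) * t)).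
  assert (HHf : forall x, HH x = gd x * (p x)^2 * exp (- (c / nu) * x)).
  { intros x. unfold HH, gd, g, k, beta. pose proof (Hp x). field. lra. }
  assert (HdH : forall x, is_derive HH x (f2 (v x) * (p x)^3 * exp (- (c / nu) * x))).
  { intros x. eapply dval.
    - apply (dmul (fun t => f1 (v t) * (p t * p t) - c / nu * (f (v t) * p t) + b / nu * (f (v t) * f (v t))) (fun t => exp (- (c / nu) * t))).
      + apply (dplus (fun t => f1 (v t) * (p t * p t) - c / nu * (f (v t) * p t)) (fun t => b / nu * (f (v t) * f (v t)))).
        * apply (dminus (fun t => f1 (v t) * (p t * p t)) (fun t => c / nu * (f (v t) * p t))).
          -- apply (dmul (fun t => f1 (v t)) (fun t => p t * p t)).
             ++ apply (dcomp f1 v). apply Hdf1; auto. apply Hdv.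
             ++ apply (dmul p p); apply Hdp.
          -- apply (dscal (fun t => f (v t) * p t)). apply (dmul (fun t => f (v t)) p). apply Hdfv. apply Hdp.
        * apply (dscal (fun t => f (v t) * f (v t))). apply (dmul (fun t => f (v t)) (fun t => f (v t))); apply Hdfv.
      + apply dexp_lin.
    - rewrite Hq. field. lra. }
  assert (Hf1L : forall u, 0 <= u < vstar -> f1 0 <= f1 u).
  { intros u Hu. apply (mvt_le f1 f2); try lra.
    - intros t Ht. apply Hdf1. lra.
    - intros t Ht. left. apply Hf2p. lra. }
  assert (Hf1R : forall u, vstar < u <= 1 -> f1 1 <= f1 u).
  { intros u Hu. apply (mvt_ge f1 f2); try lra.
    - intros t Ht. apply Hdf1. lra.
    - intros t Ht. left. apply Hf2n. lra. }
  assert (HLf1 : limL (fun t => f1 (v t)) (f1 0)) by (apply limL_comp_cont; auto).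
  assert (HRf1 : limR (fun t => f1 (v t)) (f1 1)) by (apply limR_comp_cont; auto).
  destruct (HL a ltac:(lra)) as [Ma HMa].
  assert (HgL : forall t, t < Ma -> g t < 0).
  { intros t Ht. specialize (HMa t Ht). apply Rabs_def2 in HMa. unfold g.
    pose proof (Hp t). pose proof (Hv01 t). assert (f (v t) < 0) by (apply Hneg; lra).
    unfold Rdiv. apply Rmult_neg_pos; auto. apply Rinv_0_lt_compat; auto. }
  destruct (HR (1 - a) ltac:(lra)) as [Mb HMb].
  assert (HgR : forall t, Mb < t -> 0 < g t).
  { intros t Ht. specialize (HMb t Ht). apply Rabs_def2 in HMb. unfold g.
    pose proof (Hp t). pose proof (Hv01 t). assert (0 < f (v t)) by (apply Hpos; lra).
    apply Rdiv_lt_0_compat; auto. }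
  assert (HHpos : forall x, 0 < HH x -> 0 < gd x).
  { intros x Hx. rewrite HHf in Hx. pose proof (Hp x). pose proof (exp_pos (- (c / nu) * x)).
    destruct (Rle_or_lt (gd x) 0); auto.
    assert (0 <= (- gd x) * (p x)^2 * exp (- (c / nu) * x)) by (apply Rmult_le_pos; [apply Rmult_le_pos|]; nra).
    lra. }
  assert (HHneg : forall x, HH x < 0 -> gd x < 0).
  { intros x Hx. rewrite HHf in Hx. pose proof (Hp x). pose proof (exp_pos (- (c / nu) * x)).
    destruct (Rle_or_lt 0 (gd x)) as [Hge|]; auto.
    assert (0 <= gd x * (p x)^2 * exp (- (c / nu) * x)) by (apply Rmult_le_pos; [apply Rmult_le_pos|]; nra).
    lra. }
  assert (Hgd : forall x, 0 < gd x).
  { intros x1. apply HHpos. destruct (Rle_or_lt (HH x1) 0) as [Hle|]; auto. exfalso.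
    destruct (Rle_or_lt (v x1) vstar) as [Hvx|Hvx].
    - assert (Hneg1 : forall x, x < x1 -> gd x < 0).
      { intros x Hx. apply HHneg.
        assert (HH x < HH x1); [|lra].
        apply (mvt_strict HH (fun t => f2 (v t) * (p t)^3 * exp (- (c / nu) * t))); auto.
        intros t Ht. pose proof (Hvinc t x1 ltac:(lra)). pose proof (Hv01 t).
        assert (0 < f2 (v t)) by (apply Hf2p; lra).
        apply Rmult_lt_0_compat; [apply Rmult_lt_0_compat|]; auto. apply pow_lt; auto. apply exp_pos. }
      destruct (ric_end g (fun t => f1 (v t)) k beta (f1 0) x1) as [G [HGl HGr]]; auto.
      assert (Hdec : forall z y, z <= y < x1 -> g y <= g z).
      { intros z y Hzy. apply (mvt_ge g gd); try lra. intros; apply Hdg. intros t Ht; left; apply Hneg1; lra. }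
      assert (HG0 : G <= 0) by (apply (limL_nonpos g Ma); auto).
      set (y0 := Rmin Ma x1 - 1).
      assert (Hy0a : y0 < Ma) by (unfold y0; generalize (Rmin_l Ma x1); lra).
      assert (Hy0b : y0 < x1) by (unfold y0; generalize (Rmin_r Ma x1); lra).
      assert (Hgy0 : g y0 < G).
      { assert (g y0 < g (y0 - 1)).
        { apply (mvt_strict_neg g gd); try lra. intros; apply Hdg. intros t Ht; apply Hneg1; lra. }
        pose proof (mono_le_limL g x1 G Hdec HGl (y0 - 1) ltac:(lra)). lra. }
      assert (Hq0 : 0 < f1 0 + k * g y0 + beta * (g y0)^2) by (apply (quadL beta k (f1 0) G); auto).
      assert (f1 0 <= f1 (v y0)) by (apply Hf1L; pose proof (Hv01 y0); pose proof (Hvinc y0 x1 Hy0b); lra).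
      pose proof (Hneg1 y0 Hy0b). unfold gd in H0. lra.
    - assert (Hneg1 : forall x, x1 < x -> gd x < 0).
      { intros x Hx. apply HHneg.
        assert (HH x < HH x1); [|lra].
        apply (mvt_strict_neg HH (fun t => f2 (v t) * (p t)^3 * exp (- (c / nu) * t))); auto.
        intros t Ht. pose proof (Hvinc x1 t ltac:(lra)). pose proof (Hv01 t).
        assert (f2 (v t) < 0) by (apply Hf2n; lra).
        assert (0 < (- f2 (v t)) * (p t)^3 * exp (- (c / nu) * t)); [|lra].
        apply Rmult_lt_0_compat; [apply Rmult_lt_0_compat|]; auto. lra. apply pow_lt; auto. apply exp_pos. }
      destruct (ric_endR g (fun t => f1 (v t)) k beta (f1 1) x1) as [G [HGl HGr]]; auto.
      assert (Hdec : forall z y, x1 < z <= y -> g y <= g z).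
      { intros z y Hzy. apply (mvt_ge g gd); try lra. intros; apply Hdg. intros t Ht; left; apply Hneg1; lra. }
      assert (HG0 : 0 <= G) by (apply (limR_nonneg g Mb); auto).
      set (y0 := Rmax Mb x1 + 1).
      assert (Hy0a : Mb < y0) by (unfold y0; generalize (Rmax_l Mb x1); lra).
      assert (Hy0b : x1 < y0) by (unfold y0; generalize (Rmax_r Mb x1); lra).
      assert (Hgy0 : G < g y0).
      { assert (g (y0 + 1) < g y0).
        { apply (mvt_strict_neg g gd); try lra. intros; apply Hdg. intros t Ht; apply Hneg1; lra. }
        pose proof (mono_ge_limR g x1 G Hdec HGl (y0 + 1) ltac:(lra)). lra. }
      assert (Hq0 : 0 < f1 1 + k * g y0 + beta * (g y0)^2) by (apply (quadR beta k (f1 1) G); auto).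
      assert (f1 1 <= f1 (v y0)) by (apply Hf1R; pose proof (Hv01 y0); pose proof (Hvinc x1 y0 Hy0b); lra).
      pose proof (Hneg1 y0 Hy0b). unfold gd in H0. lra. }
  assert (Hginc : forall x y, x < y -> g x < g y).
  { intros x y Hxy. apply (mvt_strict g gd); auto. }
  assert (HDg : forall x, Derive g x = gd x) by (intros x; apply is_derive_unique; auto).
  destruct (ric_end g (fun t => f1 (v t)) k beta (f1 0) 0) as [G1 [HG1l HG1r]]; auto.
  { right. intros x _. apply Hgd. }
  assert (HG1le : forall y, G1 <= g y).
  { intros y. apply (mono_ge_limL g (y + 1) G1); auto; [|lra].
    intros z y' Hz. destruct (Req_dec z y') as [->|]; [lra|]. left; apply Hginc; lra. }
  assert (HG1lt : forall y, G1 < g y) by (intros y; pose proof (HG1le (y - 1)); pose proof (Hginc (y - 1) y ltac:(lra)); lra).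
  assert (HG1n : G1 <= 0) by (apply (limL_nonpos g Ma); auto).
  assert (Hgam1 : beta * G1 = c / (2 * nu) - sqrt ((c / (2 * nu)) ^ 2 - b / nu * f1 0)).
  { unfold beta. apply gam_minus; auto. }
  destruct (ric_endR g (fun t => f1 (v t)) k beta (f1 1) 0) as [G2 [HG2l HG2r]]; auto.
  { right. intros x _. apply Hgd. }
  assert (HG2le : forall y, g y <= G2).
  { intros y. apply (mono_le_limR g (y - 1) G2); auto; [|lra].
    intros z y' Hz. destruct (Req_dec z y') as [->|]; [lra|]. left; apply Hginc; lra. }
  assert (HG2lt : forall y, g y < G2) by (intros y; pose proof (HG2le (y + 1)); pose proof (Hginc y (y + 1) ltac:(lra)); lra).
  assert (HG2n : 0 <= G2) by (apply (limR_nonneg g Mb); auto).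
  assert (Hgam2 : beta * G2 = c / (2 * nu) + sqrt ((c / (2 * nu)) ^ 2 - b / nu * f1 1)).
  { unfold beta. apply gam_plus; auto. }
  assert (Hqp : forall x, q x / p x = c / nu + (- beta) * g x).
  { intros x. unfold g, beta. rewrite Hq. pose proof (Hp x). field. split; lra. }
  assert (HqpL : limL (fun x => q x / p x) (c / nu + (- beta) * G1)).
  { apply (limL_ext (fun x => c / nu + (- beta) * g x)). intros; rewrite Hqp; auto. apply limL_aff; auto. }
  assert (HqpR : limR (fun x => q x / p x) (c / nu + (- beta) * G2)).
  { apply (limR_ext (fun x => c / nu + (- beta) * g x)). intros; rewrite Hqp; auto. apply limR_aff; auto. }
  assert (HIL : forall A, A < c / nu - beta * G1 ->
    ex_RInt_gen (fun x => exp (- 2 * A * x) * (p x ^ 2 + q x ^ 2)) (Rbar_locally m_infty) (at_point 0)).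
  { intros A HA. apply (int_left p q (c / nu + (- beta) * G1)); auto. lra. }
  assert (HIR : forall A, c / nu - beta * G2 < A ->
    ex_RInt_gen (fun x => exp (- 2 * A * x) * (p x ^ 2 + q x ^ 2)) (at_point 0) (Rbar_locally p_infty)).
  { intros A HA. apply (int_right p q (c / nu + (- beta) * G2)); auto. lra. }
  assert (Hs1 : 0 < sqrt ((c / (2 * nu)) ^ 2 - b / nu * f1 0)).
  { apply sqrt_lt_R0. pose proof (pow2_ge_0 (c / (2 * nu))). assert (0 < b / nu * (- f1 0)) by (apply Rmult_lt_0_compat; [apply Rdiv_lt_0_compat|]; lra). lra. }
  assert (Hs2 : 0 < sqrt ((c / (2 * nu)) ^ 2 - b / nu * f1 1)).
  { apply sqrt_lt_R0. pose proof (pow2_ge_0 (c / (2 * nu))). assert (0 < b / nu * (- f1 1)) by (apply Rmult_lt_0_compat; [apply Rdiv_lt_0_compat|]; lra). lra. }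
  change (b / nu) with beta in Hgam1, Hgam2, Hs1, Hs2.
  rewrite <- Hgam1, <- Hgam2.
  split; [|split; [|split; [|split; [|split]]]].
  - split; [exact Hp|split].
    + intros x y Hxy. exact (Hginc x y Hxy).
    + intros x. rewrite HDg. split; [exists (gd x); apply Hdg|split; [|apply Hgd]].
      apply (is_derive_ext (fun y => c / nu + (- beta) * g y)).
      { intros t. rewrite Hqp. reflexivity. }
      apply (dval _ _ (0 + (- beta) * gd x)).
      * apply (dplus (fun _ => c / nu) (fun y => - beta * g y)). apply dconst. apply dscal. apply Hdg.
      * ring.
  - split.
    + intros r [x ->]. simpl. change (f (v x) / p x) with (g x).
      apply Rmult_le_compat_l; [lra|]. apply HG1le.
    + intros l Hl. destruct l as [l| |]; simpl; auto.
      * destruct (Rle_or_lt l (beta * G1)) as [|Hlt]; auto. exfalso.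
        destruct (HG1l ((l - beta * G1) / beta)) as [M HM].
        { apply Rdiv_lt_0_compat; lra. }
        specialize (HM (M - 1) ltac:(lra)). apply Rabs_def2 in HM.
        assert (Hle : Rbar_le l (beta * g (M - 1))) by (apply Hl; exists (M - 1); reflexivity).
        simpl in Hle.
        assert (beta * g (M - 1) < beta * (G1 + (l - beta * G1) / beta)) by (apply Rmult_lt_compat_l; lra).
        replace (beta * (G1 + (l - beta * G1) / beta)) with l in H by (field; lra). lra.
      * exact (Hl _ (ex_intro _ 0 eq_refl)).
  - split.
    + intros r [x ->]. simpl. change (f (v x) / p x) with (g x).
      apply Rmult_le_compat_l; [lra|]. apply HG2le.
    + intros l Hl. destruct l as [l| |]; simpl; auto.
      * destruct (Rle_or_lt (beta * G2) l) as [|Hlt]; auto. exfalso.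
        destruct (HG2l ((beta * G2 - l) / beta)) as [M HM].
        { apply Rdiv_lt_0_compat; lra. }
        specialize (HM (M + 1) ltac:(lra)). apply Rabs_def2 in HM.
        assert (Hle : Rbar_le (beta * g (M + 1)) l) by (apply Hl; exists (M + 1); reflexivity).
        simpl in Hle.
        assert (beta * (G2 - (beta * G2 - l) / beta) < beta * g (M + 1)) by (apply Rmult_lt_compat_l; lra).
        replace (beta * (G2 - (beta * G2 - l) / beta)) with l in H by (field; lra). lra.
      * exact (Hl _ (ex_intro _ 0 eq_refl)).
  - intros alpha Hal.
    apply (ex_RInt_gen_ext_eq (fun x => exp (- 2 * (alpha * (c / nu)) * x) * (p x ^ 2 + q x ^ 2))).
    { intros x. f_equal. f_equal. ring. }
    apply HIL. lra.
  - intros alpha Hal.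
    apply (ex_RInt_gen_ext_eq (fun x => exp (- 2 * (alpha * (c / nu)) * x) * (p x ^ 2 + q x ^ 2))).
    { intros x. f_equal. f_equal. ring. }
    apply HIR. lra.
  - apply (ex_RInt_gen_Chasles _ 0).
    + apply (ex_RInt_gen_ext_eq (fun x => exp (- 2 * (1 / 2 * (c / nu)) * x) * (p x ^ 2 + q x ^ 2))).
      { intros x. unfold k. f_equal. f_equal. field. lra. }
      apply HIL. rewrite Hgam1. assert (c / (2 * nu) = 1 / 2 * (c / nu)) by (field; lra). lra.
    + apply (ex_RInt_gen_ext_eq (fun x => exp (- 2 * (1 / 2 * (c / nu)) * x) * (p x ^ 2 + q x ^ 2))).
      { intros x. unfold k. f_equal. f_equal. field. lra. }
      apply HIR. rewrite Hgam2. assert (c / (2 * nu) = 1 / 2 * (c / nu)) by (field; lra). lra.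
Qed.
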